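(* Fix $\epsilon>0$ and let $N>0$ be such that: whenever $K_{\alpha\beta}(x,y)>\epsilon$ for some $\alpha,\beta\in S(1)$ and some $(x,y)\in Q_{\mathbf x}\times Q_{\mathbf y}$, then $K_{\alpha\beta}(a,b)>\epsilon/2$ for all $(a,b)\in Q_{\mathbf x}\times Q_{\mathbf y}$. Let $\lambda\mapsto r_\lambda$ satisfy $r_\lambda\to\infty$. Then, as $\lambda\to\infty$, the number of singular pairs $(Q,Q')\in\mathcal Q_\lambda\times\mathcal Q_\lambda$ is $o(r_\lambda^2\log r_\lambda)$.
   Context: $K(x,y)=2\pi J_0(\|x-y\|)$ on $\mathbb R^2\times\mathbb R^2$ ($J_0$ the Bessel function of the first kind of order 0); $K_{\alpha\beta}=\partial_x^\alpha\partial_y^\beta K$; $S(1)$ is the set of multi-indices in $\mathbb N^2$ of order $\le1$. For $\mathbf z\in\mathbb Z^2$, $Q_{\mathbf z}=\mathbf z/N+[0,1/N)^2$, and $\mathcal Q_\lambda$ is the set of those $Q_{\mathbf z}$ intersecting the ball of radius $r_\lambda$ centred at the origin. Two squares $Q_{\mathbf x},Q_{\mathbf y}$ are singular if there exist $(x,y)\in Q_{\mathbf x}\times Q_{\mathbf y}$ and $\alpha,\beta\in S(1)$ with $K_{\alpha\beta}(x,y)>\epsilon$. *)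

(* Defs.v *)
From Stdlib Require Import Reals ZArith Ensembles Finite_sets.
From Coquelicot Require Import Coquelicot.
Open Scope R_scope.

Definition pt := (R * R)%type.
Definition norm2 (p : pt) : R := sqrt (fst p ^ 2 + snd p ^ 2).

Definition J0 (t : R) : R :=
  Series (fun k => (-1) ^ k / (INR (fact k)) ^ 2 * (t / 2) ^ (2 * k)).

Definition K (x y : pt) : R :=
  2 * PI * J0 (norm2 (fst x - fst y, snd x - snd y)).

Definition mi := (nat * nat)%type.
Definition S1 (a : mi) : Prop := (fst a + snd a <= 1)%nat.

Definition dx (a : mi) (F : pt -> pt -> R) : pt -> pt -> R :=
  fun x y => Derive_n (fun t => Derive_n (fun s => F (t, s) y) (snd a) (snd x))
                      (fst a) (fst x).
Definition dy (b : mi) (F : pt -> pt -> R) : pt -> pt -> R :=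
  fun x y => Derive_n (fun t => Derive_n (fun s => F x (t, s)) (snd b) (snd y))
                      (fst b) (fst y).

Definition Kab (a b : mi) : pt -> pt -> R := dx a (dy b K).

Definition inQ (N : R) (z : Z * Z) (p : pt) : Prop :=
  IZR (fst z) / N <= fst p < IZR (fst z) / N + 1 / N /\
  IZR (snd z) / N <= snd p < IZR (snd z) / N + 1 / N.

(* Q_z belongs to the family Q_lambda: it meets the ball of radius r at 0 *)
Definition in_family (N r : R) (z : Z * Z) : Prop :=
  exists p, inQ N z p /\ norm2 p < r.

Definition singular (eps N : R) (z z' : Z * Z) : Prop :=
  exists x y a b, inQ N z x /\ inQ N z' y /\ S1 a /\ S1 b /\ Kab a b x y > eps.

(* Set of singular pairs (Q,Q') in Q_lambda x Q_lambda, indexed by (z,z') *)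
Definition singular_pairs (eps N r : R) : Ensemble ((Z * Z) * (Z * Z)) :=
  fun w => in_family N r (fst w) /\ in_family N r (snd w) /\
           singular eps N (fst w) (snd w).

(* Main.v *)
Require Import Defs.
From Stdlib Require Import Reals ZArith Ensembles Finite_sets Finite_sets_facts Lra Lia Psatz List.
From Coquelicot Require Import Coquelicot.
Open Scope R_scope.

Definition c0 (k : nat) : R := (-1) ^ k / (INR (fact k)) ^ 2.
Definition h0 := PSeries c0.
Definition h1 := PSeries (PS_derive c0).
Definition h2 := PSeries (PS_derive (PS_derive c0)).

Lemma factpos k : 0 < INR (fact k).
Proof. apply lt_0_INR, lt_O_fact. Qed.

Lemma c0_S k : c0 (S k) = - c0 k / (INR (S k)) ^ 2.
Proof.
  unfold c0. rewrite fact_simpl, mult_INR.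
  pose proof (factpos k). assert (0 < INR (S k)) by (apply lt_0_INR; lia).
  change ((-1)^(S k)) with (-1 * (-1)^k).
  set (s := INR (S k)) in *. set (f := INR (fact k)) in *. set (p := (-1)^k).
  field. split; lra.
Qed.

Lemma CV_c0 : CV_radius c0 = p_infty.
Proof.
  apply CV_radius_infinite_DAlembert.
  - intros n. unfold c0. pose proof (factpos n).
    apply Rmult_integral_contrapositive; split.
    + apply pow_nonzero; lra.
    + apply Rinv_neq_0_compat. apply pow_nonzero; lra.
  - apply is_lim_seq_ext with (fun n => / (INR (S n)) ^ 2).
    + intros n. rewrite c0_S.
      assert (0 < INR (S n)) by (apply lt_0_INR; lia).
      assert (Hne : c0 n <> 0).
      { unfold c0. pose proof (factpos n). apply Rmult_integral_contrapositive; split.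
        + apply pow_nonzero; lra.
        + apply Rinv_neq_0_compat. apply pow_nonzero; lra. }
      set (c := c0 n) in *. set (s := INR (S n)) in *.
      replace (- c / s ^ 2 / c) with (- / s ^ 2) by (field; repeat split; auto; lra).
      rewrite Rabs_Ropp. rewrite Rabs_pos_eq; [reflexivity|].
      apply Rlt_le, Rinv_0_lt_compat; nra.
    + apply is_lim_seq_le_le with (fun _ => 0) (fun n => / INR (S n)).
      * intros n. assert (1 <= INR (S n)) by (rewrite S_INR; pose proof (pos_INR n); lra).
        split. apply Rlt_le, Rinv_0_lt_compat; nra.
        apply Rinv_le_contravar; nra.
      * apply is_lim_seq_const.
      * apply (is_lim_seq_incr_1 (fun n => / INR n)). replace (Finite 0) with (Rbar_inv p_infty) by reflexivity.
        apply is_lim_seq_inv. apply is_lim_seq_INR. discriminate.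
Qed.

Lemma CV1 : CV_radius (PS_derive c0) = p_infty.
Proof. rewrite CV_radius_derive. apply CV_c0. Qed.
Lemma CV2 : CV_radius (PS_derive (PS_derive c0)) = p_infty.
Proof. rewrite !CV_radius_derive. apply CV_c0. Qed.

Lemma dh0 x : is_derive h0 x (h1 x).
Proof. apply is_derive_PSeries. rewrite CV_c0. exact I. Qed.
Lemma dh1 x : is_derive h1 x (h2 x).
Proof. apply is_derive_PSeries. rewrite CV1. exact I. Qed.

Lemma ode w : w * h2 w + h1 w + h0 w = 0.
Proof.
  unfold h0, h1, h2.
  rewrite <- PSeries_incr_1.
  rewrite <- PSeries_plus, <- PSeries_plus.
  - rewrite <- (PSeries_const_0 w). apply PSeries_ext.
    intros n. unfold PS_plus, PS_incr_1, PS_derive.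
    unfold plus, zero; simpl.
    destruct n as [|m].
    + unfold c0; simpl. field.
    + change (match m with | 0%nat => 1 | S _ => INR m + 1 end) with (INR (S m)).
      rewrite (c0_S (S m)). rewrite (S_INR (S m)).
      assert (0 < INR (S m)) by (apply lt_0_INR; lia).
      set (s := INR (S m)) in *. set (c := c0 (S m)).
      field. lra.
  - apply ex_pseries_plus.
    + apply ex_pseries_incr_1. apply CV_radius_inside. rewrite CV2; exact I.
    + apply CV_radius_inside. rewrite CV1; exact I.
  - apply CV_radius_inside. rewrite CV_c0; exact I.
  - apply ex_pseries_incr_1. apply CV_radius_inside. rewrite CV2; exact I.
  - apply CV_radius_inside. rewrite CV1; exact I.
Qed.

Definition Gf (t : R) : R :=
  t * h0 (t^2/4) ^ 2 + t * (h1 (t^2/4) * (t/2)) ^ 2 + h0 (t^2/4) * (h1 (t^2/4) * (t/2))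
  + h0 (t^2/4) ^ 2 / (2 * t).

Lemma dG t : 0 < t -> is_derive Gf t (- h0 (t^2/4) ^ 2 / (2 * t ^ 2)).
Proof.
  intros Ht. unfold Gf. auto_derive.
  - assert (E0 : forall x, ex_derive (fun x => h0 x) x) by (intro x; exists (h1 x); apply dh0).
    assert (E1 : forall x, ex_derive (fun x => h1 x) x) by (intro x; exists (h2 x); apply dh1).
    Time repeat split; auto; lra.
  - replace (t^2/4) with (t * (t * 1) * / 4) by field.
    assert (Hw : 0 < t * (t * 1) * / 4) by nra.
    generalize (ode (t * (t * 1) * / 4)).
    change (Derive (fun x : R => h0 x)) with (Derive h0).
    change (Derive (fun x : R => h1 x)) with (Derive h1).
    rewrite (is_derive_unique _ _ _ (dh0 (t * (t * 1) * / 4))).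
    rewrite (is_derive_unique _ _ _ (dh1 (t * (t * 1) * / 4))).
    generalize (h0 (t * (t * 1) * / 4)) (h1 (t * (t * 1) * / 4)) (h2 (t * (t * 1) * / 4)).
    intros a b c Ho.
    assert (Hc : c = - (a + b) / (t * (t * 1) * / 4)).
    { apply Rmult_eq_reg_l with (t * (t * 1) * / 4). 2: lra.
      field_simplify. lra. lra. }
    subst c. field. lra.
Qed.

Lemma G_decr t : 1 <= t -> Gf t <= Gf 1.
Proof.
  intros Ht. destruct (Req_dec t 1) as [->|Hne]; [lra|].
  destruct (MVT_gen Gf 1 t (fun t => - h0 (t^2/4) ^ 2 / (2 * t ^ 2))) as [c [Hc Hc2]].
  - intros x Hx. rewrite Rmin_left in Hx by lra. apply dG. lra.
  - intros x Hx. rewrite Rmin_left in Hx by lra.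
    apply derivable_continuous_pt. eexists. apply is_derive_Reals. apply dG. lra.
  - rewrite Rmin_left, Rmax_right in Hc by lra.
    assert (0 <= h0 (c^2/4) ^ 2 / (2 * c ^ 2)).
    { apply Rmult_le_pos. apply pow2_ge_0. apply Rlt_le, Rinv_0_lt_compat. nra. }
    assert (- h0 (c ^ 2 / 4) ^ 2 / (2 * c ^ 2) = - (h0 (c^2/4) ^ 2 / (2 * c ^ 2))) by (unfold Rdiv; ring).
    nra.
Qed.

Lemma energy_bound t : 1 <= t ->
  t * (h0 (t^2/4) ^ 2 + (h1 (t^2/4) * (t/2)) ^ 2) <= 2 * Gf 1.
Proof.
  intros Ht. pose proof (G_decr t Ht). unfold Gf at 1 in H.
  set (a := h0 (t^2/4)) in *. set (b := h1 (t^2/4) * (t/2)) in *.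
  assert (0 <= a ^ 2 / (2 * t)).
  { apply Rmult_le_pos. apply pow2_ge_0. apply Rlt_le, Rinv_0_lt_compat. nra. }
  assert (- (a^2 + b^2) <= 2 * (a * b)) by (pose proof (pow2_ge_0 (a + b)); nra).
  assert (0 <= a^2 + b^2) by (pose proof (pow2_ge_0 a); pose proof (pow2_ge_0 b); lra).
  clearbody a b. nra.
Qed.

Definition qq (x1 x2 y1 y2 : R) := ((x1 - y1)^2 + (x2 - y2)^2) / 4.

Lemma K_eq x1 x2 y1 y2 : K (x1, x2) (y1, y2) = 2 * PI * h0 (qq x1 x2 y1 y2).
Proof.
  unfold K, J0, norm2, h0, PSeries, qq. simpl fst; simpl snd.
  f_equal. apply Series_ext. intros k. unfold c0.
  rewrite pow_mult.
  assert (E : (sqrt ((x1 - y1) ^ 2 + (x2 - y2) ^ 2) / 2) ^ 2 = ((x1 - y1) ^ 2 + (x2 - y2) ^ 2) / 4).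
  { unfold Rdiv. rewrite Rpow_mult_distr. rewrite pow2_sqrt. field.
    pose proof (pow2_ge_0 (x1 - y1)); pose proof (pow2_ge_0 (x2 - y2)); lra. }
  rewrite E. reflexivity.
Qed.

Lemma Dh0 x : Derive h0 x = h1 x.
Proof. apply is_derive_unique, dh0. Qed.
Lemma Dh1 x : Derive h1 x = h2 x.
Proof. apply is_derive_unique, dh1. Qed.
Lemma E0 x : ex_derive (fun x => h0 x) x.
Proof. exists (h1 x); apply dh0. Qed.
Lemma E1 x : ex_derive (fun x => h1 x) x.
Proof. exists (h2 x); apply dh1. Qed.

Ltac dsolve :=
  apply is_derive_unique; unfold qq; auto_derive;
  [ repeat split; first [apply E0 | apply E1 | auto]
  | try change (Derive (fun x : R => h0 x)) with (Derive h0);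
    try change (Derive (fun x : R => h1 x)) with (Derive h1);
    rewrite ?Dh0, ?Dh1; cbv [pow Rminus Rdiv qq]; field ].

Definition A1 x1 x2 y1 y2 := - PI * (x1 - y1) * h1 (qq x1 x2 y1 y2).
Definition A2 x1 x2 y1 y2 := - PI * (x2 - y2) * h1 (qq x1 x2 y1 y2).

Lemma dy10 x1 x2 y1 y2 : dy (1,0)%nat K (x1, x2) (y1, y2) = A1 x1 x2 y1 y2.
Proof.
  unfold dy, A1. simpl Derive_n.
  rewrite (Derive_ext _ (fun t => 2 * PI * h0 (qq x1 x2 t y2))).
  2:{ intros t. simpl. apply K_eq. }
  dsolve.
Qed.

Lemma dy01 x1 x2 y1 y2 : dy (0,1)%nat K (x1, x2) (y1, y2) = A2 x1 x2 y1 y2.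
Proof.
  unfold dy, A2. simpl Derive_n.
  rewrite (Derive_ext _ (fun t => 2 * PI * h0 (qq x1 x2 y1 t))).
  2:{ intros t. simpl. apply K_eq. }
  dsolve.
Qed.

Lemma dy00 x1 x2 y1 y2 : dy (0,0)%nat K (x1, x2) (y1, y2) = 2 * PI * h0 (qq x1 x2 y1 y2).
Proof. unfold dy. simpl Derive_n. apply K_eq. Qed.


Lemma K0000 x1 x2 y1 y2 : Kab (0,0)%nat (0,0)%nat (x1,x2) (y1,y2) = 2 * PI * h0 (qq x1 x2 y1 y2).
Proof. unfold Kab, dx. simpl Derive_n. apply dy00. Qed.
Lemma K0010 x1 x2 y1 y2 : Kab (0,0)%nat (1,0)%nat (x1,x2) (y1,y2) = - PI * (x1 - y1) * h1 (qq x1 x2 y1 y2).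
Proof. unfold Kab, dx. simpl Derive_n. apply dy10. Qed.
Lemma K0001 x1 x2 y1 y2 : Kab (0,0)%nat (0,1)%nat (x1,x2) (y1,y2) = - PI * (x2 - y2) * h1 (qq x1 x2 y1 y2).
Proof. unfold Kab, dx. simpl Derive_n. apply dy01. Qed.
Lemma K1000 x1 x2 y1 y2 : Kab (1,0)%nat (0,0)%nat (x1,x2) (y1,y2) = PI * (x1 - y1) * h1 (qq x1 x2 y1 y2).
Proof. unfold Kab, dx. simpl Derive_n.
  rewrite (Derive_ext _ (fun t => 2 * PI * h0 (qq t x2 y1 y2))).
  2:{ intros t. apply dy00. }
  dsolve. Qed.
Lemma K0100 x1 x2 y1 y2 : Kab (0,1)%nat (0,0)%nat (x1,x2) (y1,y2) = PI * (x2 - y2) * h1 (qq x1 x2 y1 y2).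
Proof. unfold Kab, dx. simpl Derive_n.
  rewrite (Derive_ext _ (fun t => 2 * PI * h0 (qq x1 t y1 y2))).
  2:{ intros t. apply dy00. }
  dsolve. Qed.
Lemma K1010 x1 x2 y1 y2 : Kab (1,0)%nat (1,0)%nat (x1,x2) (y1,y2) = - PI * h1 (qq x1 x2 y1 y2) - PI / 2 * (x1 - y1) ^ 2 * h2 (qq x1 x2 y1 y2).
Proof. unfold Kab, dx. simpl Derive_n.
  rewrite (Derive_ext _ (fun t => A1 t x2 y1 y2)).
  2:{ intros t. apply dy10. }
  unfold A1. dsolve. Qed.
Lemma K0110 x1 x2 y1 y2 : Kab (0,1)%nat (1,0)%nat (x1,x2) (y1,y2) = - PI / 2 * (x1 - y1) * (x2 - y2) * h2 (qq x1 x2 y1 y2).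
Proof. unfold Kab, dx. simpl Derive_n.
  rewrite (Derive_ext _ (fun t => A1 x1 t y1 y2)).
  2:{ intros t. apply dy10. }
  unfold A1. dsolve. Qed.
Lemma K1001 x1 x2 y1 y2 : Kab (1,0)%nat (0,1)%nat (x1,x2) (y1,y2) = - PI / 2 * (x1 - y1) * (x2 - y2) * h2 (qq x1 x2 y1 y2).
Proof. unfold Kab, dx. simpl Derive_n.
  rewrite (Derive_ext _ (fun t => A2 t x2 y1 y2)).
  2:{ intros t. apply dy01. }
  unfold A2. dsolve. Qed.
Lemma K0101 x1 x2 y1 y2 : Kab (0,1)%nat (0,1)%nat (x1,x2) (y1,y2) = - PI * h1 (qq x1 x2 y1 y2) - PI / 2 * (x2 - y2) ^ 2 * h2 (qq x1 x2 y1 y2).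
Proof. unfold Kab, dx. simpl Derive_n.
  rewrite (Derive_ext _ (fun t => A2 x1 t y1 y2)).
  2:{ intros t. apply dy01. }
  unfold A2. dsolve. Qed.

Lemma sq_abs x y : 0 <= y -> x ^ 2 <= y ^ 2 -> Rabs x <= y.
Proof. intros Hy H. apply Rabs_le. split; nra. Qed.

Lemma abs_sq x : Rabs x ^ 2 = x ^ 2.
Proof. destruct (Rle_or_lt 0 x); [rewrite Rabs_pos_eq | rewrite Rabs_left]; auto; ring. Qed.

Lemma absb (s w d1 d2 a b c : R) : 0 < s -> 1 <= w -> d1^2 + d2^2 = 4*w ->
  a^2 <= s^2 -> b^2 * w <= s^2 -> w * c + b + a = 0 ->
  Rabs a <= s /\ Rabs b <= s /\ Rabs (d1 * b) <= 2 * s /\ Rabs (d2 * b) <= 2 * s /\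
  Rabs (d1^2 * c) <= 8 * s /\ Rabs (d2^2 * c) <= 8 * s /\ Rabs (d1 * d2 * c) <= 4 * s.
Proof.
  intros Hs Hw Hd Ha Hb Hc.
  assert (Ra : Rabs a <= s) by (apply sq_abs; lra).
  assert (Rb : Rabs b <= s) by (apply sq_abs; nra).
  assert (Rd1 : Rabs (d1 * b) <= 2 * s) by (apply sq_abs; [lra| pose proof (pow2_ge_0 d2); pose proof (pow2_ge_0 b); nra]).
  assert (Rd2 : Rabs (d2 * b) <= 2 * s) by (apply sq_abs; [lra| pose proof (pow2_ge_0 d1); pose proof (pow2_ge_0 b); nra]).
  assert (Rwc : w * Rabs c <= 2 * s).
  { replace (w * Rabs c) with (Rabs (w * c)) by (rewrite Rabs_mult, (Rabs_pos_eq w); lra).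
    replace (w * c) with (- (a + b)) by lra. rewrite Rabs_Ropp.
    pose proof (Rabs_triang a b). lra. }
  pose proof (Rabs_pos c).
  repeat split; auto.
  - rewrite Rabs_mult, (Rabs_pos_eq (d1^2)) by apply pow2_ge_0.
    pose proof (pow2_ge_0 d2). nra.
  - rewrite Rabs_mult, (Rabs_pos_eq (d2^2)) by apply pow2_ge_0.
    pose proof (pow2_ge_0 d1). nra.
  - rewrite !Rabs_mult.
    assert (2 * (Rabs d1 * Rabs d2) <= 4 * w).
    { pose proof (pow2_ge_0 (Rabs d1 - Rabs d2)).
      assert (Rabs d1 ^ 2 = d1 ^ 2) by (apply abs_sq).
      assert (Rabs d2 ^ 2 = d2 ^ 2) by (apply abs_sq).
      nra. }
    pose proof (Rabs_pos d1); pose proof (Rabs_pos d2). nra.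
Qed.

Lemma S1_cases a : S1 a -> a = (0,0)%nat \/ a = (1,0)%nat \/ a = (0,1)%nat.
Proof. destruct a as [[|[|]] [|[|]]]; unfold S1; simpl; intros; auto; lia. Qed.

Lemma Kab_small eps : 0 < eps -> exists T, 0 < T /\
  forall x1 x2 y1 y2 a b, S1 a -> S1 b -> T ^ 2 <= (x1 - y1) ^ 2 + (x2 - y2) ^ 2 ->
  Kab a b (x1, x2) (y1, y2) <= eps.
Proof.
  intros He. set (s := eps / 32). assert (Hs : 0 < s) by (unfold s; lra).
  set (G1 := Gf 1).
  exists (2 + 2 * Rabs G1 / s ^ 2). split.
  { assert (0 <= 2 * Rabs G1 / s ^ 2).
    { apply Rmult_le_pos. pose proof (Rabs_pos G1); lra. apply Rlt_le, Rinv_0_lt_compat. nra. }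
    lra. }
  intros x1 x2 y1 y2 a b Ha Hb HT.
  set (T := 2 + 2 * Rabs G1 / s ^ 2) in *.
  assert (HT0 : 0 <= 2 * Rabs G1 / s ^ 2).
  { apply Rmult_le_pos. pose proof (Rabs_pos G1); lra. apply Rlt_le, Rinv_0_lt_compat. nra. }
  assert (HTs : 2 * G1 <= T * s ^ 2).
  { unfold T. rewrite Rmult_plus_distr_r.
    replace (2 * Rabs G1 / s ^ 2 * s ^ 2) with (2 * Rabs G1) by (field; lra).
    pose proof (Rle_abs G1). nra. }
  assert (HT2 : 2 <= T) by (unfold T; lra).
  clearbody T.
  set (q := (x1 - y1) ^ 2 + (x2 - y2) ^ 2) in *.
  set (t := sqrt q).
  assert (Hq : 0 <= q) by (unfold q; pose proof (pow2_ge_0 (x1 - y1)); pose proof (pow2_ge_0 (x2 - y2)); lra).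
  assert (Ht2 : t ^ 2 = q) by (apply pow2_sqrt; auto).
  assert (HtT : T <= t).
  { unfold t. rewrite <- (sqrt_pow2 T) by lra. apply sqrt_le_1_alt. lra. }
  pose proof (energy_bound t ltac:(lra)) as En. fold G1 in En.
  rewrite Ht2 in En.
  assert (Eq : q / 4 = qq x1 x2 y1 y2) by reflexivity. rewrite Eq in En.
  set (w := qq x1 x2 y1 y2) in *.
  assert (Hw1 : 1 <= w) by (rewrite <- Eq; nra).
  assert (Hbt : (h1 w * (t / 2)) ^ 2 = h1 w ^ 2 * w).
  { replace w with (t ^ 2 / 4) by (rewrite Ht2; auto). field. }
  rewrite Hbt in En.
  assert (Hsum : h0 w ^ 2 + h1 w ^ 2 * w <= s ^ 2).
  { assert (0 < t) by lra. nra. }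
  assert (Ha2 : h0 w ^ 2 <= s ^ 2) by (pose proof (pow2_ge_0 (h1 w)); nra).
  assert (Hb2 : h1 w ^ 2 * w <= s ^ 2) by (pose proof (pow2_ge_0 (h0 w)); nra).
  assert (Hd : (x1 - y1) ^ 2 + (x2 - y2) ^ 2 = 4 * w) by (rewrite <- Eq; fold q; lra).
  destruct (absb s w (x1 - y1) (x2 - y2) (h0 w) (h1 w) (h2 w) Hs Hw1 Hd Ha2 Hb2 (ode w))
    as (B1 & B2 & B3 & B4 & B5 & B6 & B7).
  pose proof PI_RGT_0 as Hpi. pose proof PI_4 as Hpi4.
  assert (Hfin : 5 * PI * s <= eps) by (unfold s; nra).
  assert (L : forall z, z <= Rabs z) by apply Rle_abs.
  assert (L2 : forall z, - z <= Rabs z) by apply Rabs_maj2.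
  destruct (S1_cases a Ha) as [-> | [-> | ->]]; destruct (S1_cases b Hb) as [-> | [-> | ->]].
  - rewrite K0000. fold w. pose proof (L (h0 w)). nra.
  - rewrite K0010. fold w. pose proof (L2 ((x1 - y1) * h1 w)). nra.
  - rewrite K0001. fold w. pose proof (L2 ((x2 - y2) * h1 w)). nra.
  - rewrite K1000. fold w. pose proof (L ((x1 - y1) * h1 w)). nra.
  - rewrite K1010. fold w. pose proof (L2 (h1 w)). pose proof (L2 ((x1 - y1) ^ 2 * h2 w)). nra.
  - rewrite K1001. fold w. pose proof (L2 ((x1 - y1) * (x2 - y2) * h2 w)). nra.
  - rewrite K0100. fold w. pose proof (L ((x2 - y2) * h1 w)). nra.
  - rewrite K0110. fold w. pose proof (L2 ((x1 - y1) * (x2 - y2) * h2 w)). nra.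
  - rewrite K0101. fold w. pose proof (L2 (h1 w)). pose proof (L2 ((x2 - y2) ^ 2 * h2 w)). nra.
Qed.

Lemma list_card {X : Type} (l : list X) :
  exists n, cardinal X (fun w : X => List.In w l) n /\ (n <= length l)%nat.
Proof.
  induction l as [|a l IH].
  - exists 0%nat. split; [|simpl; lia].
    replace (fun w : X => List.In w nil) with (Empty_set X). constructor.
    apply Extensionality_Ensembles. split; intros x Hx; inversion Hx.
  - destruct IH as [n [Hn Hl]].
    destruct (classic (List.In a l)) as [Ha|Ha].
    + exists n. split; [|simpl; lia].
      replace (fun w : X => List.In w (a :: l)) with (fun w : X => List.In w l). auto.
      apply Extensionality_Ensembles. split; intros x Hx; unfold Ensembles.In in *; simpl in *.
      * auto.
      * destruct Hx; subst; auto.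
    + exists (S n). split; [|simpl; lia].
      replace (fun w : X => List.In w (a :: l)) with (Ensembles.Add X (fun w : X => List.In w l) a).
      * apply card_add; auto.
      * apply Extensionality_Ensembles. split; intros x Hx; unfold Ensembles.In in *; simpl in *.
        -- destruct Hx as [x Hx | x Hx]; [right; exact Hx | inversion Hx; left; auto].
        -- destruct Hx as [Hx|Hx]; [subst; right; constructor | left; exact Hx].
Qed.

Definition zrange (M : nat) : list Z :=
  map (fun i => (Z.of_nat i - Z.of_nat M)%Z) (seq 0 (2 * M + 1)).

Lemma in_zrange M k : (Z.abs k <= Z.of_nat M)%Z -> List.In k (zrange M).
Proof.
  intros H. apply in_map_iff. exists (Z.to_nat (k + Z.of_nat M)). split; [lia|].
  apply in_seq. lia.
Qed.

Lemma zrange_len M : length (zrange M) = (2 * M + 1)%nat.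
Proof. unfold zrange. rewrite length_map, length_seq. reflexivity. Qed.

Definition boxL (M D : nat) : list ((Z * Z) * (Z * Z)) :=
  map (fun p => (fst p, (fst (fst p) + fst (snd p), snd (fst p) + snd (snd p))%Z))
    (list_prod (list_prod (zrange M) (zrange M)) (list_prod (zrange D) (zrange D))).

Lemma boxL_len M D : length (boxL M D) = ((2*M+1)*(2*M+1)*((2*D+1)*(2*D+1)))%nat.
Proof. unfold boxL. rewrite length_map, !length_prod, !zrange_len. reflexivity. Qed.

Lemma in_boxL M D (z z' : Z * Z) :
  (Z.abs (fst z) <= Z.of_nat M)%Z -> (Z.abs (snd z) <= Z.of_nat M)%Z ->
  (Z.abs (fst z' - fst z) <= Z.of_nat D)%Z -> (Z.abs (snd z' - snd z) <= Z.of_nat D)%Z ->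
  List.In (z, z') (boxL M D).
Proof.
  intros H1 H2 H3 H4. unfold boxL. apply in_map_iff.
  exists (z, (fst z' - fst z, snd z' - snd z)%Z). split.
  - destruct z, z'; simpl. f_equal. f_equal; lia.
  - destruct z as [z1 z2]; simpl in *. apply in_prod; apply in_prod; apply in_zrange; auto.
Qed.

Lemma zbound (k : Z) (R0 : R) : Rabs (IZR k) < R0 -> (Z.abs k <= Z.of_nat (Z.to_nat (up R0)))%Z.
Proof.
  intros H. destruct (archimed R0) as [H1 H2].
  assert (Hk : IZR (Z.abs k) < IZR (up R0)) by (rewrite abs_IZR; lra).
  apply lt_IZR in Hk. lia.
Qed.

Lemma up_le (R0 : R) : 0 < R0 -> INR (Z.to_nat (up R0)) <= R0 + 1.
Proof.
  intros H. destruct (archimed R0) as [H1 H2].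
  rewrite INR_IZR_INZ. rewrite Z2Nat.id.
  - lra.
  - apply le_IZR. lra.
Qed.

Lemma abs_le_norm2 p : Rabs (fst p) <= norm2 p /\ Rabs (snd p) <= norm2 p.
Proof.
  unfold norm2. split.
  - rewrite <- sqrt_Rsqr_abs. apply sqrt_le_1_alt. unfold Rsqr. pose proof (pow2_ge_0 (snd p)). simpl. lra.
  - rewrite <- sqrt_Rsqr_abs. apply sqrt_le_1_alt. unfold Rsqr. pose proof (pow2_ge_0 (fst p)). simpl. lra.
Qed.

Lemma inQ_scale N k c : 0 < N -> IZR k / N <= c < IZR k / N + 1 / N -> IZR k <= N * c < IZR k + 1.
Proof.
  intros HN [H1 H2].
  assert (E : IZR k = N * (IZR k / N)) by (field; lra).
  assert (E1 : N * (1 / N) = 1) by (field; lra).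
  set (u := IZR k / N) in *. set (v := 1 / N) in *. rewrite E.
  split; nra.
Qed.

Lemma family_bound N r z : 0 < N -> in_family N r z ->
  Rabs (IZR (fst z)) < N * r + 1 /\ Rabs (IZR (snd z)) < N * r + 1.
Proof.
  intros HN [p [[Q1 Q2] Hp]].
  destruct (abs_le_norm2 p) as [P1 P2].
  apply inQ_scale in Q1; auto. apply inQ_scale in Q2; auto.
  pose proof (Rle_abs (fst p)); pose proof (Rabs_maj2 (fst p)).
  pose proof (Rle_abs (snd p)); pose proof (Rabs_maj2 (snd p)).
  split; apply Rabs_def1; nra.
Qed.

Lemma sing_bound eps N T z z' : 0 < N -> 0 < T ->
  (forall x1 x2 y1 y2 a b, S1 a -> S1 b -> T ^ 2 <= (x1 - y1) ^ 2 + (x2 - y2) ^ 2 ->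
     Kab a b (x1, x2) (y1, y2) <= eps) ->
  singular eps N z z' ->
  Rabs (IZR (fst z' - fst z)) < N * T + 1 /\ Rabs (IZR (snd z' - snd z)) < N * T + 1.
Proof.
  intros HN HT HK [[x1 x2] [[y1 y2] [a [b [[Q1 Q2] [[R1 R2] [Ha [Hb Hk]]]]]]]].
  simpl in *.
  assert (Hq : (x1 - y1) ^ 2 + (x2 - y2) ^ 2 < T ^ 2).
  { destruct (Rlt_or_le ((x1 - y1) ^ 2 + (x2 - y2) ^ 2) (T ^ 2)) as [H|H]; auto.
    specialize (HK x1 x2 y1 y2 a b Ha Hb H). lra. }
  pose proof (pow2_ge_0 (x1 - y1)); pose proof (pow2_ge_0 (x2 - y2)).
  assert (A1 : - T < x1 - y1 < T) by (split; nra).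
  assert (A2 : - T < x2 - y2 < T) by (split; nra).
  apply inQ_scale in Q1; auto. apply inQ_scale in Q2; auto.
  apply inQ_scale in R1; auto. apply inQ_scale in R2; auto.
  rewrite !minus_IZR.
  split; apply Rabs_def1; nra.
Qed.

Theorem lemma3p3 (eps N : R) (r : R -> R) :
  0 < eps -> 0 < N ->
  (forall (z z' : Z * Z) (a b : mi), S1 a -> S1 b ->
     (exists x y, inQ N z x /\ inQ N z' y /\ Kab a b x y > eps) ->
     forall u v, inQ N z u -> inQ N z' v -> Kab a b u v > eps / 2) ->
  (forall M, exists L, forall lam, L <= lam -> M <= r lam) ->
  forall e, 0 < e -> exists L, forall lam, L <= lam ->
    exists n : nat, cardinal _ (singular_pairs eps N (r lam)) n /\
      INR n <= e * (r lam) ^ 2 * ln (r lam).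
Proof.
  intros Heps HN _ Hr e He.
  destruct (Kab_small eps Heps) as [T [HT HK]].
  set (D := Z.to_nat (up (N * T + 1))).
  set (A := (2 * N + 5) ^ 2 * (2 * INR D + 1) ^ 2).
  destruct (Hr (Rmax 1 (exp (A / e)))) as [L HL]. exists L. intros lam Hlam.
  specialize (HL lam Hlam). set (rr := r lam) in *.
  assert (Hr1 : 1 <= rr) by (pose proof (Rmax_l 1 (exp (A / e))); lra).
  assert (Hre : exp (A / e) <= rr) by (pose proof (Rmax_r 1 (exp (A / e))); lra).
  set (M := Z.to_nat (up (N * rr + 1))).
  destruct (list_card (boxL M D)) as [m [Hm Hml]].
  assert (Inc : Included _ (singular_pairs eps N rr) (fun w => List.In w (boxL M D))).
  { intros [z z'] [Hz [Hz' Hs]]. unfold Ensembles.In. simpl in *.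
    destruct (family_bound N rr z HN Hz) as [F1 F2].
    destruct (sing_bound eps N T z z' HN HT HK Hs) as [S1' S2'].
    apply in_boxL; apply zbound; auto. }
  destruct (finite_cardinal _ _ (Finite_downward_closed _ _ (cardinal_finite _ _ _ Hm) _ Inc)) as [n Hn].
  exists n. split; auto.
  pose proof (incl_card_le _ _ _ _ _ Hn Hm Inc) as Hnm.
  assert (Hnl : (n <= (2*M+1)*(2*M+1)*((2*D+1)*(2*D+1)))%nat) by (rewrite <- boxL_len; lia).
  apply le_INR in Hnl. rewrite !mult_INR, !plus_INR, !mult_INR in Hnl.
  replace (INR 2) with 2 in Hnl by (simpl; ring). replace (INR 1) with 1 in Hnl by (simpl; ring).
  assert (HM : INR M <= N * rr + 2).
  { pose proof (up_le (N * rr + 1) ltac:(nra)). unfold M. lra. }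
  pose proof (pos_INR M). pose proof (pos_INR D).
  assert (HX : 2 * INR M + 1 <= (2 * N + 5) * rr) by nra.
  assert (HX2 : (2 * INR M + 1) * (2 * INR M + 1) <= ((2 * N + 5) * rr) ^ 2) by nra.
  assert (HA : INR n <= A * rr ^ 2).
  { unfold A. pose proof (pow2_ge_0 (2 * INR D + 1)).
    replace ((2 * INR D + 1) * (2 * INR D + 1)) with ((2 * INR D + 1) ^ 2) in Hnl by ring.
    assert ((2 * INR M + 1) * (2 * INR M + 1) * (2 * INR D + 1) ^ 2 <= ((2 * N + 5) * rr) ^ 2 * (2 * INR D + 1) ^ 2)
      by (apply Rmult_le_compat_r; auto).
    nra. }
  assert (Hln : A / e <= ln rr).
  { rewrite <- (ln_exp (A / e)). apply ln_le; auto. apply exp_pos. }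
  assert (Hln2 : A <= e * ln rr).
  { replace A with (e * (A / e)) by (field; lra). apply Rmult_le_compat_l; lra. }
  pose proof (pow2_ge_0 rr). nra.
Qed.
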